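(* For $\omega\in\mathbb{T}$ and $\upsilon\in\operatorname{Aut}\mathbb{D}$, written $\upsilon(\lambda)=\eta\frac{\lambda-\alpha}{1-\bar\alpha\lambda}$ with $\eta\in\mathbb{T}$, $\alpha\in\mathbb{D}$, define $$f_{\omega\upsilon}(a,s,p)=\left(\frac{\omega\eta(1-|\alpha|^2)a}{1-\bar\alpha s+\bar\alpha^2p},\ \tau_\upsilon(s,p)\right),$$ where $\tau_\upsilon(\lambda_1+\lambda_2,\lambda_1\lambda_2)=(\upsilon(\lambda_1)+\upsilon(\lambda_2),\upsilon(\lambda_1)\upsilon(\lambda_2))$ for $\lambda_1,\lambda_2\in\mathbb{D}$; explicitly $$f_{\omega\upsilon}(a,s,p)=\frac{\eta}{1-\bar\alpha s+\bar\alpha^2p}\Big(\omega(1-|\alpha|^2)a,\ -2\alpha+(1+|\alpha|^2)s-2\bar\alpha p,\ \eta(\alpha^2-\alpha s+p)\Big).$$ Then each $f_{\omega\upsilon}$ is an automorphism of $\mathcal{P}$ (a bijective holomorphic self-map with holomorphic inverse) which extends analytically to a neighbourhood of $\overline{\mathcal{P}}$; for all $\omega_1,\omega_2\in\mathbb{T}$ and $\upsilon_1,\upsilon_2\in\operatorname{Aut}\mathbb{D}$, $f_{\omega_1\upsilon_1}\circ f_{\omega_2\upsilon_2}=f_{(\omega_1\omega_2)(\upsilon_1\circ\upsilon_2)}$, and $(f_{\omega\upsilon})^{-1}=f_{\bar\omega\upsilon^{-1}}$. Consequently $\{f_{\omega\upsilon}:\omega\in\mathbb{T},\upsilon\in\operatorname{Aut}\mathbb{D}\}$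 is a group of automorphisms of $\mathcal{P}$ under composition.
   Context: $\mathbb{D}$ is the open unit disc, $\mathbb{T}$ the unit circle, $\operatorname{Aut}\mathbb{D}$ the group of Möbius automorphisms of $\mathbb{D}$. $\mathbb{B}$ is the open unit ball of $\mathbb{C}^{2\times 2}$ (operator norm), $\pi(A)=(a_{21},\operatorname{tr}A,\det A)$, $\mathcal{P}=\pi(\mathbb{B})$, $\overline{\mathcal{P}}$ its closure. Every $(s,p)$ with $(a,s,p)\in\mathcal{P}$ is of the form $(\lambda_1+\lambda_2,\lambda_1\lambda_2)$ with $\lambda_1,\lambda_2\in\mathbb{D}$. *)

(* Defs.v *)
From Stdlib Require Import Reals Lra.
Open Scope R_scope.

Record Cplx := mkC { Re : R; Im : R }.

Definition RtoC (r : R) : Cplx := mkC r 0.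
Definition C0 : Cplx := RtoC 0.
Definition C1 : Cplx := RtoC 1.
Definition Cadd (z w : Cplx) : Cplx := mkC (Re z + Re w) (Im z + Im w).
Definition Copp (z : Cplx) : Cplx := mkC (- Re z) (- Im z).
Definition Csub (z w : Cplx) : Cplx := Cadd z (Copp w).
Definition Cmul (z w : Cplx) : Cplx :=
  mkC (Re z * Re w - Im z * Im w) (Re z * Im w + Im z * Re w).
Definition Cconj (z : Cplx) : Cplx := mkC (Re z) (- Im z).
Definition Cnorm2 (z : Cplx) : R := Re z * Re z + Im z * Im z.
(* multiplicative inverse (total; 1/0 is some unspecified value of R) *)
Definition Cinv (z : Cplx) : Cplx :=
  mkC (Re z / Cnorm2 z) (- Im z / Cnorm2 z).
Definition Cdiv (z w : Cplx) : Cplx := Cmul z (Cinv w).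

Declare Scope Cplx_scope.
Delimit Scope Cplx_scope with Cx.
Infix "+" := Cadd : Cplx_scope.
Infix "-" := Csub : Cplx_scope.
Infix "*" := Cmul : Cplx_scope.
Infix "/" := Cdiv : Cplx_scope.
Notation "- z" := (Copp z) : Cplx_scope.

Definition inD (z : Cplx) : Prop := Cnorm2 z < 1.
Definition inT (z : Cplx) : Prop := Cnorm2 z = 1.

Definition mob (eta alpha lam : Cplx) : Cplx :=
  (eta * (lam - alpha) / (C1 - Cconj alpha * lam))%Cx.

Definition C3 : Type := (Cplx * Cplx * Cplx)%type.
Definition C3add (z w : C3) : C3 :=
  let '(a, s, p) := z in let '(a', s', p') := w in
  ((a + a')%Cx, (s + s')%Cx, (p + p')%Cx).
Definition C3sub (z w : C3) : C3 :=
  let '(a, s, p) := z in let '(a', s', p') := w in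
  ((a - a')%Cx, (s - s')%Cx, (p - p')%Cx).
Definition C3scal (c : Cplx) (z : C3) : C3 :=
  let '(a, s, p) := z in ((c * a)%Cx, (c * s)%Cx, (c * p)%Cx).
Definition C3norm2 (z : C3) : R :=
  let '(a, s, p) := z in Cnorm2 a + Cnorm2 s + Cnorm2 p.
Definition C3dist2 (z w : C3) : R := C3norm2 (C3sub z w).

Record M2 := mkM2 { m11 : Cplx; m12 : Cplx; m21 : Cplx; m22 : Cplx }.

(* operator norm (w.r.t. the Euclidean norm on C^2) is < 1:
   there is r < 1 with |A x| <= r |x| for all x in C^2 *)
Definition inBall (A : M2) : Prop :=
  exists r : R, 0 <= r < 1 /\
    forall x1 x2 : Cplx,
      Cnorm2 (m11 A * x1 + m12 A * x2)%Cx + Cnorm2 (m21 A * x1 + m22 A * x2)%Cx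
      <= (r * r) * (Cnorm2 x1 + Cnorm2 x2).

Definition piM (A : M2) : C3 :=
  (m21 A, (m11 A + m22 A)%Cx, (m11 A * m22 A - m12 A * m21 A)%Cx).

Definition inP (z : C3) : Prop := exists A : M2, inBall A /\ piM A = z.

Definition inPbar (z : C3) : Prop :=
  forall eps : R, 0 < eps -> exists w : C3, inP w /\ C3dist2 z w < eps * eps.

Definition Clinear (L : C3 -> C3) : Prop :=
  (forall z w, L (C3add z w) = C3add (L z) (L w)) /\
  (forall c z, L (C3scal c z) = C3scal c (L z)).

Definition Cdifferentiable (F : C3 -> C3) (z : C3) : Prop :=
  exists L : C3 -> C3, Clinear L /\
    forall eps : R, 0 < eps -> exists delta : R, 0 < delta /\
      forall h : C3, 0 < C3norm2 h < delta * delta ->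
        C3norm2 (C3sub (C3sub (F (C3add z h)) (F z)) (L h))
          <= (eps * eps) * C3norm2 h.

Definition holo_on (U : C3 -> Prop) (F : C3 -> C3) : Prop :=
  forall z, U z -> Cdifferentiable F z.

Definition C3open (U : C3 -> Prop) : Prop :=
  forall z, U z -> exists eps : R, 0 < eps /\
    forall w, C3dist2 z w < eps * eps -> U w.

Definition autP (f : C3 -> C3) : Prop :=
  (forall z, inP z -> inP (f z)) /\ holo_on inP f /\
  exists g : C3 -> C3,
    (forall z, inP z -> inP (g z)) /\ holo_on inP g /\
    (forall z, inP z -> g (f z) = z) /\ (forall z, inP z -> f (g z) = z).

Definition extends_near_Pbar (f : C3 -> C3) : Prop :=
  exists (U : C3 -> Prop) (F : C3 -> C3),
    C3open U /\ (forall z, inPbar z -> U z) /\ holo_on U F /\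
    (forall z, inP z -> F z = f z).

Definition fmap (omega eta alpha : Cplx) (z : C3) : C3 :=
  let '(a, s, p) := z in
  let ab := Cconj alpha in
  let n2 := RtoC (Cnorm2 alpha) in
  let k := (eta / (C1 - ab * s + ab * ab * p))%Cx in
  ((k * (omega * (C1 - n2) * a))%Cx,
   (k * (- (RtoC 2 * alpha) + (C1 + n2) * s - RtoC 2 * ab * p))%Cx,
   (k * (eta * (alpha * alpha - alpha * s + p)))%Cx).

(* Main.v *)
From Pilot Require Import Defs.
From Stdlib Require Import Reals Lra Psatz Field Ring.
Open Scope R_scope.

Local Close Scope Cplx_scope.

Lemma Cext : forall z w, Re z = Re w -> Im z = Im w -> z = w.
Proof. intros [a b] [c d]; simpl; intros; subst; reflexivity. Qed.

Notation Cz := Pilot.Defs.C0.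
Notation Co := Pilot.Defs.C1.
Ltac cunf := unfold Csub, Cadd, Copp, Cmul, Pilot.Defs.C0, Pilot.Defs.C1, RtoC, Cconj, Cdiv, Cinv, Cnorm2 in *.

Lemma C_ring : ring_theory Cz Co Cadd Cmul Csub Copp (@eq Cplx).
Proof. constructor; intros; apply Cext; cunf; simpl; ring. Qed.

Lemma Cnorm2_eq0 : forall z, Cnorm2 z = 0 -> z = Cz.
Proof. intros [a b]; unfold Cnorm2; simpl; intros H.
  assert (a = 0) by nra. assert (b = 0) by nra. subst. reflexivity. Qed.

Lemma Cnorm2_nonneg : forall z, 0 <= Cnorm2 z.
Proof. intros [a b]; unfold Cnorm2; simpl; nra. Qed.

Lemma C_field : field_theory Cz Co Cadd Cmul Csub Copp Cdiv Cinv (@eq Cplx).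
Proof. constructor.
  - exact C_ring.
  - intro H. assert (Re Co = Re Cz) by (rewrite H; reflexivity). cunf; simpl in *; lra.
  - reflexivity.
  - intros p Hp. assert (Cnorm2 p <> 0) by (intro E; apply Hp; apply Cnorm2_eq0; exact E).
    destruct p as [a b]; apply Cext; cunf; simpl in *; field; auto.
Qed.

Add Field Cfield : C_field.

Lemma test (x y : Cplx) : y <> Cz -> Cdiv (Cmul x y) y = x.
Proof. intros. field. auto. Qed.

Local Open Scope Cplx_scope.

Lemma Cnorm2_mul z w : Cnorm2 (z * w) = (Cnorm2 z * Cnorm2 w)%R.
Proof. destruct z, w; cunf; simpl; ring. Qed.
Lemma Cnorm2_conj z : Cnorm2 (Cconj z) = Cnorm2 z.
Proof. destruct z; cunf; simpl; ring. Qed.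
Lemma Cnorm2_opp z : Cnorm2 (- z) = Cnorm2 z.
Proof. destruct z; cunf; simpl; ring. Qed.
Lemma RtoC_norm z : RtoC (Cnorm2 z) = z * Cconj z.
Proof. destruct z; apply Cext; cunf; simpl; ring. Qed.
Lemma conj_mul z w : Cconj (z * w) = Cconj z * Cconj w.
Proof. destruct z, w; apply Cext; cunf; simpl; ring. Qed.
Lemma conj_add z w : Cconj (z + w) = Cconj z + Cconj w.
Proof. destruct z, w; apply Cext; cunf; simpl; ring. Qed.
Lemma conj_opp z : Cconj (- z) = - Cconj z.
Proof. destruct z; apply Cext; cunf; simpl; ring. Qed.
Lemma conj_conj z : Cconj (Cconj z) = z.
Proof. destruct z; apply Cext; cunf; simpl; ring. Qed.
Lemma conj_one : Cconj Co = Co.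
Proof. apply Cext; cunf; simpl; ring. Qed.
Lemma Cnorm2_one : Cnorm2 Co = 1%R.
Proof. cunf; simpl; ring. Qed.
Lemma RtoC2 : RtoC 2 = Co + Co.
Proof. apply Cext; cunf; simpl; ring. Qed.

Lemma Cneq0 z : (0 < Cnorm2 z)%R -> z <> Cz.
Proof. intros H E; subst; cunf; simpl in H; lra. Qed.
Lemma Cnorm2_pos z : z <> Cz -> (0 < Cnorm2 z)%R.
Proof. intros H. pose proof (Cnorm2_nonneg z).
  destruct (Rle_lt_or_eq_dec _ _ H0); auto. exfalso; apply H, Cnorm2_eq0; auto. Qed.

Lemma T_conj_inv w : inT w -> Cconj w = Cinv w.
Proof. unfold inT; intros H; destruct w as [a b]; apply Cext; cunf; simpl in *; rewrite H; field. Qed.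
Lemma T_neq0 w : inT w -> w <> Cz.
Proof. unfold inT; intros H; apply Cneq0; lra. Qed.
Lemma T_mul_conj w : inT w -> w * Cconj w = Co.
Proof. intros H. rewrite <- RtoC_norm. unfold inT in H. rewrite H. reflexivity. Qed.

Lemma norm_sub_le (y v : Cplx) : (Cnorm2 (y - v)%Cx <= 2 * Cnorm2 y + 2 * Cnorm2 v)%R.
Proof. destruct y as [a b], v as [c d]; cunf; simpl. pose proof (pow2_ge_0 (a+c)); pose proof (pow2_ge_0 (b+d)). nra. Qed.
Lemma norm_add_le (y v : Cplx) : (Cnorm2 (y + v)%Cx <= 2 * Cnorm2 y + 2 * Cnorm2 v)%R.
Proof. destruct y as [a b], v as [c d]; cunf; simpl. pose proof (pow2_ge_0 (a-c)); pose proof (pow2_ge_0 (b-d)). nra. Qed.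
Lemma norm_add3_le (x y v : Cplx) : (Cnorm2 (x + y + v)%Cx <= 3 * (Cnorm2 x + Cnorm2 y + Cnorm2 v))%R.
Proof. destruct x as [a b], y as [c d], v as [e f]; cunf; simpl.
  pose proof (pow2_ge_0 (a-c)); pose proof (pow2_ge_0 (b-d)); pose proof (pow2_ge_0 (a-e));
  pose proof (pow2_ge_0 (b-f)); pose proof (pow2_ge_0 (c-e)); pose proof (pow2_ge_0 (d-f)). nra. Qed.

Lemma norm_split (x y : Cplx) (l : R) : (0 < l)%R ->
  (l * Cnorm2 x <= l * (1 + l) * Cnorm2 y + (1 + l) * Cnorm2 (x - y)%Cx)%R.
Proof. intros Hl; destruct x as [a b], y as [c d]; cunf; simpl.
  assert (0 <= (l*c - (a - c))^2 + (l*d - (b-d))^2)%R by (apply Rplus_le_le_0_compat; apply pow2_ge_0). nra. Qed.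

Lemma lower_keep (M D : R) : (0 < M)%R -> (M < D)%R ->
  exists e, (0 < e)%R /\ forall x y, (D <= Cnorm2 x)%R -> (Cnorm2 (x - y)%Cx < e)%R -> (M < Cnorm2 y)%R.
Proof. intros HM HD.
  set (l := ((D - M) / (2 * M))%R).
  assert (Hl : (0 < l)%R) by (unfold l; apply Rdiv_lt_0_compat; lra).
  exists ((D - M) * l / (2 * (1 + l)))%R. split.
  { apply Rdiv_lt_0_compat; nra. }
  intros x y Hx Hxy. pose proof (norm_split x y l Hl).
  assert (Hl2 : (l * (2 * M) = D - M)%R) by (unfold l; field; lra).
  assert (H2: ((1+l) * Cnorm2 (x - y)%Cx < (D - M) * l / 2)%R).
  { apply Rmult_lt_compat_l with (r := (1+l)%R) in Hxy; [|lra].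
    replace ((1 + l) * ((D - M) * l / (2 * (1 + l))))%R with ((D-M)*l/2)%R in Hxy by (field; lra). lra. }
  assert (l * D <= l * (1 + l) * Cnorm2 y + (D - M) * l / 2)%R by nra.
  assert (l * (1+l) * M < l * (1+l) * Cnorm2 y)%R by nra.
  apply Rmult_lt_reg_l with (r := (l * (1+l))%R); nra.
Qed.

Local Close Scope Cplx_scope.

Lemma lowr (t U V X W L : R) : 0 <= t < 1 -> 0 <= V <= t * U -> 0 <= U -> 0 <= L ->
  L = U - 2 * X + V -> W = ((1+t)/2)^2 * U - 2 * ((1+t)/2) * X + V -> 0 <= W ->
  (1 - t)^2 / 4 * U <= L.
Proof. intros Ht HV HU HL EL EW HW.
  set (e := ((1+t)/2)%R) in *.
  assert (E1 : e * L = e * (1 - e) * U - (1 - e) * V + W) by (subst; ring).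
  assert (E2 : (1 - e) * V <= (1 - e) * t * U) by (unfold e; nra).
  assert (E3 : (1-t)^2/4 = (1 - e) * (e - t)) by (unfold e; field).
  assert (E4 : (1-t)^2/4 * U <= e * L) by (rewrite E3; nra).
  assert (e <= 1) by (unfold e; lra). nra.
Qed.

Lemma vec_lower (y1 y2 v1 v2 : Cplx) (t : R) : 0 <= t < 1 ->
  Cnorm2 v1 + Cnorm2 v2 <= t * (Cnorm2 y1 + Cnorm2 y2) ->
  (1 - t)^2 / 4 * (Cnorm2 y1 + Cnorm2 y2) <= Cnorm2 (y1 - v1)%Cx + Cnorm2 (y2 - v2)%Cx.
Proof. intros Ht H.
  pose proof (Cnorm2_nonneg v1); pose proof (Cnorm2_nonneg v2);
  pose proof (Cnorm2_nonneg y1); pose proof (Cnorm2_nonneg y2);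
  pose proof (Cnorm2_nonneg (y1 - v1)%Cx); pose proof (Cnorm2_nonneg (y2 - v2)%Cx).
  set (e := ((1+t)/2)%R).
  pose proof (Cnorm2_nonneg (RtoC e * y1 - v1)%Cx); pose proof (Cnorm2_nonneg (RtoC e * y2 - v2)%Cx).
  destruct y1 as [a b], y2 as [c d], v1 as [p q], v2 as [r s]; cunf; simpl in *.
  apply (lowr t (a*a+b*b+(c*c+d*d)) (p*p+q*q+(r*r+s*s)) (a*p+b*q+c*r+d*s)
    ((e * a - 0 * b + - p) * (e * a - 0 * b + - p) + (e * b + 0 * a + - q) * (e * b + 0 * a + - q) +
    ((e * c - 0 * d + - r) * (e * c - 0 * d + - r) + (e * d + 0 * c + - s) * (e * d + 0 * c + - s))));
  try lra; unfold e; ring.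
Qed.

Lemma gram_real (a d G B c : R) : 0 < c -> c <= a -> c <= d ->
  c * (B + a * a) <= a * G -> B = a * d - G -> c * c <= G.
Proof. intros Hc Ha Hd H EB. subst B.
  assert (H1 : c * a * (a + d) <= G * (a + c)) by nra.
  assert (H2 : c * (a + c) <= a * (a + d)) by nra.
  assert (H3 : c * c * (a + c) <= G * (a + c)) by nra.
  nra.
Qed.

Lemma gram_det (m11 m12 m21 m22 : Cplx) (c : R) : 0 < c ->
  (forall x1 x2, c * (Cnorm2 x1 + Cnorm2 x2) <=
     Cnorm2 (m11 * x1 + m12 * x2)%Cx + Cnorm2 (m21 * x1 + m22 * x2)%Cx) ->
  c * c <= Cnorm2 (m11 * m22 - m12 * m21)%Cx.
Proof. intros Hc H.
  pose proof (H Co Cz) as Ha. pose proof (H Cz Co) as Hd.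
  set (bt := (m11 * Cconj m12 + m21 * Cconj m22)%Cx).
  set (a := (Cnorm2 m11 + Cnorm2 m21)%R).
  pose proof (H (Cconj bt) (- RtoC a)%Cx) as Hx.
  apply (gram_real a (Cnorm2 m12 + Cnorm2 m22) _ (Cnorm2 bt) c); auto.
  - revert Ha; unfold a; destruct m11, m12, m21, m22; cunf; simpl. intros; nra.
  - revert Hd; destruct m11, m12, m21, m22; cunf; simpl. intros; nra.
  - revert Hx; unfold a, bt; destruct m11, m12, m21, m22; cunf; simpl.
    match goal with |- ?A <= ?B -> ?C <= ?D => replace C with A by ring; replace D with B by ring end; auto.
  - unfold a, bt; destruct m11, m12, m21, m22; cunf; simpl; ring.
Qed.

Definition den_of (al : Cplx) (z : C3) : Cplx :=
  let '(_, s, p) := z in (Co - Cconj al * s + Cconj al * Cconj al * p)%Cx.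

Lemma ball_lower (A : M2) (al : Cplx) (r : R) : 0 <= r < 1 ->
  (forall x1 x2 : Cplx,
      Cnorm2 (m11 A * x1 + m12 A * x2)%Cx + Cnorm2 (m21 A * x1 + m22 A * x2)%Cx
      <= (r * r) * (Cnorm2 x1 + Cnorm2 x2)) -> inD al ->
  forall y1 y2,
  (1 - Cnorm2 al)^2 / 4 * (Cnorm2 y1 + Cnorm2 y2) <=
   Cnorm2 (y1 - Cconj al * (m11 A * y1 + m12 A * y2))%Cx +
   Cnorm2 (y2 - Cconj al * (m21 A * y1 + m22 A * y2))%Cx.
Proof. intros Hr HA Hal y1 y2. unfold inD in Hal. pose proof (Cnorm2_nonneg al).
  apply vec_lower; [lra|].
  rewrite !Cnorm2_mul, !Cnorm2_conj.
  pose proof (HA y1 y2). pose proof (Cnorm2_nonneg y1); pose proof (Cnorm2_nonneg y2).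
  pose proof (Cnorm2_nonneg (m11 A * y1 + m12 A * y2)%Cx);
  pose proof (Cnorm2_nonneg (m21 A * y1 + m22 A * y2)%Cx).
  assert (r * r <= 1) by (assert (r*r <= r*1) by (apply Rmult_le_compat_l; lra); lra).
  assert (HW : Cnorm2 (m11 A * y1 + m12 A * y2)%Cx + Cnorm2 (m21 A * y1 + m22 A * y2)%Cx
     <= Cnorm2 y1 + Cnorm2 y2).
  { eapply Rle_trans; [eassumption|]. rewrite <- (Rmult_1_l (Cnorm2 y1 + Cnorm2 y2)) at 2.
    apply Rmult_le_compat_r; lra. }
  rewrite <- Rmult_plus_distr_l. apply Rmult_le_compat_l; lra.
Qed.

Lemma ball_den (A : M2) (al : Cplx) : inBall A -> inD al ->
  (1 - Cnorm2 al)^4 / 16 <= Cnorm2 (den_of al (piM A)).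
Proof. intros [r [Hr HA]] Hal.
  pose proof (Cnorm2_nonneg al). unfold inD in Hal.
  assert (Hc : 0 < (1 - Cnorm2 al)^2/4) by (apply Rdiv_lt_0_compat; [apply pow_lt|]; lra).
  pose proof (gram_det (Co - Cconj al * m11 A)%Cx (- (Cconj al * m12 A))%Cx
     (- (Cconj al * m21 A))%Cx (Co - Cconj al * m22 A)%Cx _ Hc) as G.
  replace ((1 - Cnorm2 al)^4/16) with ((1 - Cnorm2 al)^2/4 * ((1 - Cnorm2 al)^2/4)) by field.
  replace (den_of al (piM A)) with
    ((Co - Cconj al * m11 A) * (Co - Cconj al * m22 A) - - (Cconj al * m12 A) * - (Cconj al * m21 A))%Cx.
  2:{ unfold den_of, piM. ring. }
  apply G. intros x1 x2.
  pose proof (ball_lower A al r Hr HA Hal x1 x2) as L.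
  replace ((Co - Cconj al * m11 A) * x1 + - (Cconj al * m12 A) * x2)%Cx
    with (x1 - Cconj al * (m11 A * x1 + m12 A * x2))%Cx by ring.
  replace (- (Cconj al * m21 A) * x1 + (Co - Cconj al * m22 A) * x2)%Cx
    with (x2 - Cconj al * (m21 A * x1 + m22 A * x2))%Cx by ring.
  exact L.
Qed.

Lemma mob_ident (y w al : Cplx) :
  Cnorm2 (y - Cconj al * w)%Cx - Cnorm2 (w - al * y)%Cx = (1 - Cnorm2 al) * (Cnorm2 y - Cnorm2 w).
Proof. destruct y, w, al; cunf; simpl; ring. Qed.

Lemma Cinv_norm (w : Cplx) : inT w -> Cnorm2 (Cinv w) = 1.
Proof. intros H; rewrite <- T_conj_inv by auto. rewrite Cnorm2_conj. exact H. Qed.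

Lemma fmap_P (om eta al : Cplx) (z : C3) : inT om -> inT eta -> inD al -> inP z ->
  inP (fmap om eta al z).
Proof. intros Hom Heta Hal [A [HA Hz]]. subst z.
  pose proof (ball_den A al HA Hal) as HD.
  pose proof (Cnorm2_nonneg al) as Ht0. pose proof Hal as Ht1. unfold inD in Ht1.
  assert (HD0 : 0 < Cnorm2 (den_of al (piM A))).
  { eapply Rlt_le_trans; [|exact HD]. apply Rdiv_lt_0_compat; [apply pow_lt|]; lra. }
  apply Cneq0 in HD0.
  destruct A as [a11 a12 a21 a22]. simpl in HD0 |- *.
  set (ab := Cconj al) in *.
  set (D := (Co - ab * (a11 + a22) + ab * ab * (a11 * a22 - a12 * a21))%Cx) in *.
  pose proof (T_neq0 om Hom) as Hom0. pose proof (T_neq0 eta Heta) as Heta0.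
  destruct HA as [r [Hr HA]]; simpl in HA.
  set (t := Cnorm2 al) in *.
  exists (mkM2 (eta * ((a11 - al) * (Co - ab * a22) + a12 * (ab * a21)) / D)%Cx
               (Cinv om * (eta * ((a11 - al) * (ab * a12) + a12 * (Co - ab * a11)) / D))%Cx
               (om * (eta * (a21 * (Co - ab * a22) + (a22 - al) * (ab * a21)) / D))%Cx
               (eta * (a21 * (ab * a12) + (a22 - al) * (Co - ab * a11)) / D)%Cx).
  split.
  2:{ unfold piM, fmap; simpl. unfold t. rewrite RtoC_norm, RtoC2. fold ab. fold D.
      f_equal; [f_equal|]; unfold D; field; auto. }
  exists (sqrt (1 - (1 - t) * (1 - r*r) / 4)).
  assert (Hr2 : r * r < 1) by (assert (r*r <= r*1) by (apply Rmult_le_compat_l; lra); lra).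
  assert (Hq : 0 <= 1 - (1 - t) * (1 - r*r) / 4).
  { assert ((1 - t) * (1 - r*r) <= 1*1) by (apply Rmult_le_compat; nra). lra. }
  assert (Hq2 : 0 < (1 - t) * (1 - r*r)) by (apply Rmult_lt_0_compat; nra).
  split.
  { split. apply sqrt_pos. set (q := ((1 - t) * (1 - r*r))%R) in *.
    assert (sqrt (1 - q/4) < sqrt 1) by (apply sqrt_lt_1; lra). rewrite sqrt_1 in H. exact H. }
  intros x1 x2. simpl. rewrite sqrt_sqrt by lra.
  set (x2' := (Cinv om * x2)%Cx).
  set (y1 := (((Co - ab * a22) * x1 + ab * a12 * x2') / D)%Cx).
  set (y2 := ((ab * a21 * x1 + (Co - ab * a11) * x2') / D)%Cx).
  set (w1 := (a11 * y1 + a12 * y2)%Cx). set (w2 := (a21 * y1 + a22 * y2)%Cx).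
  assert (F1 : ((eta * ((a11 - al) * (Co - ab * a22) + a12 * (ab * a21)) / D) * x1 +
     (Cinv om * (eta * ((a11 - al) * (ab * a12) + a12 * (Co - ab * a11)) / D)) * x2 =
     eta * (w1 - al * y1))%Cx).
  { unfold w1, y1, y2, x2'. field. auto. }
  assert (F2 : ((om * (eta * (a21 * (Co - ab * a22) + (a22 - al) * (ab * a21)) / D)) * x1 +
     (eta * (a21 * (ab * a12) + (a22 - al) * (Co - ab * a11)) / D) * x2 =
     om * eta * (w2 - al * y2))%Cx).
  { unfold w2, y1, y2, x2'. field. auto. }
  assert (F3 : x1 = (y1 - ab * w1)%Cx).
  { unfold w1, y1, y2, x2', D. field. auto. }
  assert (F4 : x2' = (y2 - ab * w2)%Cx).
  { unfold w2, y1, y2, x2', D. field. auto. }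
  assert (F5 : Cnorm2 x2' = Cnorm2 x2).
  { unfold x2'. rewrite Cnorm2_mul, Cinv_norm by auto. ring. }
  rewrite F1, F2, !Cnorm2_mul. unfold inT in Hom, Heta. rewrite Hom, Heta.
  rewrite <- F5. rewrite F3, F4.
  pose proof (mob_ident y1 w1 al) as I1. pose proof (mob_ident y2 w2 al) as I2.
  fold ab t in I1, I2.
  pose proof (HA y1 y2) as HW. fold w1 w2 in HW.
  pose proof (norm_sub_le y1 (ab * w1)%Cx) as N1. pose proof (norm_sub_le y2 (ab * w2)%Cx) as N2.
  rewrite Cnorm2_mul in N1, N2. unfold ab in N1, N2. rewrite Cnorm2_conj in N1, N2. fold t in N1, N2. fold ab in N1, N2.
  pose proof (Cnorm2_nonneg y1); pose proof (Cnorm2_nonneg y2);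
  pose proof (Cnorm2_nonneg w1); pose proof (Cnorm2_nonneg w2).
  set (X := Cnorm2 (y1 - ab * w1)%Cx + Cnorm2 (y2 - ab * w2)%Cx) in *.
  set (Y := Cnorm2 y1 + Cnorm2 y2) in *. set (W := Cnorm2 w1 + Cnorm2 w2) in *.
  assert (HX : X <= 4 * Y).
  { assert (W <= Y) by (assert (r*r*Y <= 1 * Y) by (apply Rmult_le_compat_r; unfold Y; lra); lra).
    assert (t * W <= 1 * Y) by (apply Rmult_le_compat; unfold W, Y in *; lra).
    unfold X, Y, W in *. lra. }
  assert (HB : Cnorm2 (w1 - al * y1)%Cx + Cnorm2 (w2 - al * y2)%Cx = X - (1 - t) * (Y - W))
    by (unfold X, Y, W; lra).
  rewrite !Rmult_1_l, HB.
  assert (HYW : (1 - t) * (1 - r * r) * Y <= (1 - t) * (Y - W)).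
  { assert (W <= r * r * Y) by (unfold W, Y; exact HW).
    assert (0 <= 1 - t) by lra.
    assert (E7 : (1 - t) * (1 - r * r) * Y = (1 - t) * (Y - r*r*Y)) by ring.
    rewrite E7. apply Rmult_le_compat_l; lra. }
  assert (Hfin : (1 - t) * (1 - r * r) * X <= 4 * ((1 - t) * (1 - r * r) * Y)).
  { assert ((1 - t) * (1 - r * r) * X <= (1 - t) * (1 - r * r) * (4 * Y)) by (apply Rmult_le_compat_l; lra). lra. }
  lra.
Qed.

Local Open Scope Cplx_scope.

Lemma Cmul_neq0 x y : x <> Cz -> y <> Cz -> x * y <> Cz.
Proof. intros Hx Hy E. apply Cnorm2_pos in Hx. apply Cnorm2_pos in Hy.
  assert (Cnorm2 (x*y) = 0%R) by (rewrite E; cunf; simpl; ring).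
  rewrite Cnorm2_mul in H. nra. Qed.

Ltac neqC H := let E := fresh in intro E; apply H; rewrite <- E;
  try change {| Re := R1; Im := R0 |} with Co; try change {| Re := R0; Im := R0 |} with Cz; ring.

Definition Qm (c d : Cplx) (z : C3) : Cplx := let '(_, s, p) := z in c*c*p + c*d*s + d*d.

Definition Gm (w a b c d : Cplx) (z : C3) : C3 :=
  let '(x, s, p) := z in
  ((w*(a*d - b*c)*x / Qm c d z), (((Co+Co)*a*c*p + (a*d+b*c)*s + (Co+Co)*b*d)/Qm c d z),
   ((a*a*p + a*b*s + b*b)/Qm c d z)).

Lemma fmap_Gm om eta al z : den_of al z <> Cz ->
  fmap om eta al z = Gm om eta (-(eta*al)) (-(Cconj al)) Co z.
Proof. destruct z as [[x s] p]. unfold den_of, fmap, Gm, Qm. intros H.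
  rewrite RtoC_norm, RtoC2. f_equal; [f_equal|]; field; neqC H. Qed.

Lemma Gm_scale w a b c d k z : k <> Cz -> Qm c d z <> Cz ->
  Gm w (k*a) (k*b) (k*c) (k*d) z = Gm w a b c d z.
Proof. destruct z as [[x s] p]. unfold Gm, Qm. intros Hk H.
  assert (k * c * (k * c) * p + k * c * (k * d) * s + k * d * (k * d) = (k*k) * (c * c * p + c * d * s + d * d)) by ring.
  f_equal; [f_equal|]; field; rewrite H0; split; auto; apply Cmul_neq0; auto; apply Cmul_neq0; auto. Qed.

Lemma Qm_Gm w a b c d c1 d1 z : Qm c d z <> Cz ->
  Qm c1 d1 (Gm w a b c d z) = Qm (c1*a + d1*c) (c1*b + d1*d) z / Qm c d z.
Proof. destruct z as [[x s] p]. unfold Gm, Qm. intros H. field; auto. Qed.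

Lemma Gm_comp w1 a1 b1 c1 d1 w2 a2 b2 c2 d2 z : Qm c2 d2 z <> Cz ->
  Qm (c1*a2 + d1*c2) (c1*b2 + d1*d2) z <> Cz ->
  Gm w1 a1 b1 c1 d1 (Gm w2 a2 b2 c2 d2 z) =
  Gm (w1*w2) (a1*a2 + b1*c2) (a1*b2 + b1*d2) (c1*a2 + d1*c2) (c1*b2 + d1*d2) z.
Proof. intros H2 H12.
  assert (HQ := Qm_Gm w2 a2 b2 c2 d2 c1 d1 z H2).
  destruct z as [[x s] p]. cbn [Gm] in HQ |- *. rewrite HQ.
  unfold Qm in *. f_equal; [f_equal|]; field; auto.
Qed.

Local Open Scope Cplx_scope.

Lemma den_P_neq al z : inD al -> inP z -> den_of al z <> Cz.
Proof. intros Hal [A [HA Hz]]. subst z. pose proof (ball_den A al HA Hal) as HD.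
  apply Cneq0. eapply Rlt_le_trans; [|exact HD]. unfold inD in Hal.
  apply Rdiv_lt_0_compat; [apply pow_lt|]; lra. Qed.

Lemma Qm_den al z : Qm (- Cconj al) Co z = den_of al z.
Proof. destruct z as [[x s] p]; unfold Qm, den_of; ring. Qed.

Lemma Gm_ext w a b c d a' b' c' d' z : a = a' -> b = b' -> c = c' -> d = d' ->
  Gm w a b c d z = Gm w a' b' c' d' z.
Proof. intros; subst; reflexivity. Qed.


Lemma sum_neq0 (u v : Cplx) : (Cnorm2 u < Cnorm2 v)%R -> v + u <> Cz.
Proof. intros H E. assert (Hu : u = - v).
  { transitivity ((v + u) - v); [ring|]. rewrite E. ring. }
  rewrite Hu, Cnorm2_opp in H. lra. Qed.

Lemma Cmul_eq0 x y : x * y = Cz -> x = Cz \/ y = Cz.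
Proof. intros E. destruct (Req_dec (Cnorm2 x) 0) as [H|H].
  - left; apply Cnorm2_eq0; auto.
  - right. apply Cnorm2_eq0. assert (Cnorm2 (x*y) = 0%R) by (rewrite E; cunf; simpl; ring).
    rewrite Cnorm2_mul in H0. pose proof (Cnorm2_nonneg y). pose proof (Cnorm2_nonneg x).
    destruct (Rmult_integral _ _ H0); auto. contradiction. Qed.

Lemma cross (x y u v : Cplx) : y <> Cz -> v <> Cz -> x / y = u / v -> x * v = u * y.
Proof. intros Hy Hv E. transitivity (x / y * (y * v)); [field; auto|].
  rewrite E. field. auto. Qed.

Lemma normD_mul (x y : Cplx) : inD x -> inD y -> inD (x * y).
Proof. unfold inD; intros. rewrite Cnorm2_mul. pose proof (Cnorm2_nonneg x); pose proof (Cnorm2_nonneg y).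
  assert (Cnorm2 x * Cnorm2 y <= Cnorm2 x * 1)%R by (apply Rmult_le_compat_l; lra). lra. Qed.

Lemma one_sub_neq0 (u : Cplx) : inD u -> Co - u <> Cz.
Proof. intros H. replace (Co - u) with (Co + - u) by ring. apply sum_neq0.
  rewrite Cnorm2_opp, Cnorm2_one. exact H. Qed.

Lemma mob_K_C (u v : Cplx) : (Cnorm2 (Co + u * v)%Cx - Cnorm2 (- (Cconj v + u))%Cx)%R =
   ((1 - Cnorm2 u) * (1 - Cnorm2 v))%R.
Proof. destruct u, v; cunf; simpl; ring. Qed.

Lemma Qm_scale k c d z : Qm (k*c) (k*d) z = k*k*Qm c d z.
Proof. destruct z as [[x s] p]; unfold Qm; ring. Qed.

Lemma sub_eq0 (x y : Cplx) : x - y = Cz -> x = y.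
Proof. intros E. transitivity ((x - y) + y); [ring|]. rewrite E; ring. Qed.

Lemma two_neq0 : Co + Co <> Cz.
Proof. apply Cneq0. cunf; simpl; lra. Qed.

Lemma half_D : inD (Cinv (Co + Co)).
Proof. unfold inD; cunf; simpl. field_simplify; lra. Qed.

Lemma oppD x : inD x -> inD (- x).
Proof. unfold inD; rewrite Cnorm2_opp; auto. Qed.

Lemma conjD x : inD x -> inD (Cconj x).
Proof. unfold inD; rewrite Cnorm2_conj; auto. Qed.

Lemma zeroD : inD Cz.
Proof. unfold inD; cunf; simpl; lra. Qed.

Lemma Qm_ext c d c' d' z : c = c' -> d = d' -> Qm c d z = Qm c' d' z.
Proof. intros; subst; reflexivity. Qed.

Lemma comp_law om1 e1 a1 om2 e2 a2 e3 a3 :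
  inT om1 -> inT e1 -> inD a1 -> inT om2 -> inT e2 -> inD a2 -> inT e3 -> inD a3 ->
  (forall lam, inD lam -> mob e3 a3 lam = mob e1 a1 (mob e2 a2 lam)) ->
  forall z, inP z -> fmap om1 e1 a1 (fmap om2 e2 a2 z) = fmap (om1 * om2) e3 a3 z.
Proof.
  intros Hom1 He1 Ha1 Hom2 He2 Ha2 He3 Ha3 Hmob z Hz.
  pose proof (T_neq0 _ He1) as He10. pose proof (T_neq0 _ He2) as He20.
  pose proof (T_neq0 _ He3) as He30.
  set (A := e1 * (e2 + a1 * Cconj a2)).
  set (B := - (e1 * (e2 * a2 + a1))).
  set (C := - (Cconj a2 + Cconj a1 * e2)).
  set (K := Co + Cconj a1 * e2 * a2).
  assert (HKC : (Cnorm2 C < Cnorm2 K)%R).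
  { pose proof (mob_K_C (Cconj a1 * e2) a2) as M. fold C K in M.
    rewrite Cnorm2_mul, Cnorm2_conj in M. unfold inT in He2. rewrite He2 in M.
    unfold inD in Ha1, Ha2.
    assert (0 < (1 - Cnorm2 a1 * 1) * (1 - Cnorm2 a2))%R by (apply Rmult_lt_0_compat; lra). lra. }
  assert (HK : K <> Cz).
  { apply Cneq0. pose proof (Cnorm2_nonneg C). lra. }
  assert (HA : A <> Cz).
  { unfold A. apply Cmul_neq0; auto. apply sum_neq0. unfold inT in He2. rewrite He2.
    apply normD_mul; auto. apply conjD; auto. }
  assert (HDet : A * K - B * C <> Cz).
  { replace (A * K - B * C) with (e1 * e2 * (Co - a1 * Cconj a1) * (Co - a2 * Cconj a2))
      by (unfold A, B, C, K; ring).
    repeat apply Cmul_neq0; auto; apply one_sub_neq0; apply normD_mul; auto; apply conjD; auto. }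
  assert (Hrat : forall lam, inD lam -> mob e1 a1 (mob e2 a2 lam) = (A*lam + B) / (C*lam + K)).
  { intros lam Hl.
    assert (H1 : Co - Cconj a2 * lam <> Cz) by (apply one_sub_neq0, normD_mul; auto; apply conjD; auto).
    assert (H2 : C * lam + K <> Cz).
    { replace (C * lam + K) with (K + C * lam) by ring. apply sum_neq0.
      rewrite Cnorm2_mul. unfold inD in Hl. pose proof (Cnorm2_nonneg C).
      assert (Cnorm2 C * Cnorm2 lam <= Cnorm2 C * 1)%R by (apply Rmult_le_compat_l; lra). lra. }
    assert (Hu : Co - Cconj a1 * mob e2 a2 lam = (C * lam + K) / (Co - Cconj a2 * lam)).
    { unfold mob, C, K. field. auto. }
    unfold mob at 1. rewrite Hu. unfold mob, A, B. field. auto. }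
  set (Pf := fun lam => e3 * (lam - a3) * (C * lam + K) - (A * lam + B) * (Co - Cconj a3 * lam)).
  assert (HP : forall lam, inD lam -> Pf lam = Cz).
  { intros lam Hl. pose proof (Hmob lam Hl) as E. rewrite Hrat in E by auto.
    unfold mob in E. unfold Pf.
    assert (H1 : Co - Cconj a3 * lam <> Cz) by (apply one_sub_neq0, normD_mul; auto; apply conjD; auto).
    assert (H2 : C * lam + K <> Cz).
    { replace (C * lam + K) with (K + C * lam) by ring. apply sum_neq0.
      rewrite Cnorm2_mul. unfold inD in Hl. pose proof (Cnorm2_nonneg C).
      assert (Cnorm2 C * Cnorm2 lam <= Cnorm2 C * 1)%R by (apply Rmult_le_compat_l; lra). lra. }
    apply cross in E; auto. rewrite E. ring. }
  set (h := Cinv (Co + Co)).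
  pose proof two_neq0 as H2.
  assert (Hh1 := HP h half_D). assert (Hh2 := HP (- h) (oppD _ half_D)). assert (Hh0 := HP Cz zeroD).
  assert (E0 : - (e3 * a3 * K) - B = Cz) by (rewrite <- Hh0; unfold Pf; ring).
  assert (E1 : e3 * K - e3 * a3 * C - A + B * Cconj a3 = Cz).
  { transitivity (Pf h - Pf (- h)); [unfold Pf, h; field; auto | rewrite Hh1, Hh2; ring]. }
  assert (E2 : e3 * C + A * Cconj a3 = Cz).
  { transitivity ((Co+Co) * (Pf h + Pf (- h)) - (Co+Co)*(Co+Co)* Pf Cz);
      [unfold Pf, h; field; auto | rewrite Hh1, Hh2, Hh0; ring]. }
  assert (Heta : e3 * K = A).
  { apply sub_eq0. assert (Z : (e3 * K - A) * (A * K - B * C) = Cz).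
    { transitivity (A * (K * (e3 * K - e3 * a3 * C - A + B * Cconj a3) - C * (- (e3 * a3 * K) - B))
         - B * K * (e3 * C + A * Cconj a3)); [ring|]. rewrite E0, E1, E2. ring. }
    destruct (Cmul_eq0 _ _ Z); auto. contradiction. }
  assert (Hab : K * Cconj a3 + C = Cz).
  { assert (Z : A * (K * Cconj a3 + C) = Cz).
    { transitivity (K * (e3 * C + A * Cconj a3) - C * (e3 * K - A)); [ring|].
      rewrite E2, Heta. ring. }
    destruct (Cmul_eq0 _ _ Z); auto. contradiction. }
  assert (HB : e3 * a3 * K = - B).
  { apply sub_eq0. transitivity (- (- (e3 * a3 * K) - B)); [ring|]. rewrite E0; ring. }
  assert (Hd2 : den_of a2 z <> Cz) by (apply den_P_neq; auto).
  assert (Hd3 : den_of a3 z <> Cz) by (apply den_P_neq; auto).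
  assert (Hd1 : den_of a1 (fmap om2 e2 a2 z) <> Cz) by (apply den_P_neq; auto; apply fmap_P; auto).
  rewrite (fmap_Gm om1 e1 a1) by auto. rewrite (fmap_Gm om2 e2 a2) by auto.
  rewrite (fmap_Gm (om1 * om2) e3 a3) by auto.
  rewrite Gm_comp.
  2:{ rewrite Qm_den; auto. }
  2:{ rewrite (Qm_ext _ _ (K * - Cconj a3) (K * Co)). rewrite Qm_scale, Qm_den.
      apply Cmul_neq0; auto. apply Cmul_neq0; auto.
      - transitivity C; [unfold C; ring|]. apply sub_eq0. rewrite <- Hab. ring.
      - unfold K; ring. }
  rewrite (Gm_ext _ _ _ _ _ (K * e3) (K * - (e3 * a3)) (K * - Cconj a3) (K * Co)).
  - apply Gm_scale; auto. rewrite Qm_den; auto.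
  - transitivity A; [unfold A; ring| rewrite <- Heta; ring].
  - transitivity B; [unfold B; ring|]. apply sub_eq0. transitivity (- (- (e3 * a3 * K) - B)); [ring|]. rewrite E0; ring.
  - transitivity C; [unfold C; ring|]. apply sub_eq0. rewrite <- Hab. ring.
  - unfold K; ring.
Qed.

Local Open Scope Cplx_scope.

Lemma conj_zero : Cconj Cz = Cz.
Proof. apply Cext; cunf; simpl; ring. Qed.

Lemma neq_by X k Y : X = k * Y -> k <> Cz -> Y <> Cz -> X <> Cz.
Proof. intros E Hk HY. rewrite E. apply Cmul_neq0; auto. Qed.

Lemma fmap_id z : fmap Co Co Cz z = z.
Proof. destruct z as [[x s] p]. unfold fmap. rewrite conj_zero, RtoC2.
  replace (RtoC (Cnorm2 Cz)) with Cz by (apply Cext; cunf; simpl; ring).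
  assert (Co <> Cz) by (apply Cneq0; rewrite Cnorm2_one; lra).
  f_equal; [f_equal|]; field; neqC H. Qed.

Lemma mob_id lam : mob Co Cz lam = lam.
Proof. unfold mob. rewrite conj_zero.
  assert (Co <> Cz) by (apply Cneq0; rewrite Cnorm2_one; lra). field. neqC H. Qed.

Lemma inT_one : inT Co.
Proof. unfold inT. apply Cnorm2_one. Qed.
Lemma inT_conj w : inT w -> inT (Cconj w).
Proof. unfold inT; rewrite Cnorm2_conj; auto. Qed.

Lemma inv_law om eta al eta' al' :
  inT om -> inT eta -> inD al -> inT eta' -> inD al' ->
  (forall lam, inD lam -> mob eta' al' (mob eta al lam) = lam /\ mob eta al (mob eta' al' lam) = lam) ->
  forall z, inP z ->
    fmap (Cconj om) eta' al' (fmap om eta al z) = z /\ fmap om eta al (fmap (Cconj om) eta' al' z) = z.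
Proof. intros Hom He Ha He' Ha' Hm z Hz. split.
  - rewrite (comp_law (Cconj om) eta' al' om eta al Co Cz); auto.
    + replace (Cconj om * om) with (om * Cconj om) by ring. rewrite T_mul_conj by auto. apply fmap_id.
    + apply inT_conj; auto.
    + apply inT_one.
    + apply zeroD.
    + intros lam Hl. rewrite mob_id. symmetry. apply Hm; auto.
  - rewrite (comp_law om eta al (Cconj om) eta' al' Co Cz); auto.
    + rewrite T_mul_conj by auto. apply fmap_id.
    + apply inT_conj; auto.
    + apply inT_one.
    + apply zeroD.
    + intros lam Hl. rewrite mob_id. symmetry. apply Hm; auto.
Qed.

Lemma mob_inv eta al lam : inT eta -> inD al -> inD lam ->
  mob (Cconj eta) (- (eta * al)) (mob eta al lam) = lam /\
  mob eta al (mob (Cconj eta) (- (eta * al)) lam) = lam.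
Proof. intros He Ha Hl. pose proof (T_neq0 _ He) as He0.
  assert (Ht : Co - al * Cconj al <> Cz) by (apply one_sub_neq0, normD_mul; auto; apply conjD; auto).
  assert (H1 : Co - Cconj al * lam <> Cz) by (apply one_sub_neq0, normD_mul; auto; apply conjD; auto).
  assert (H2 : Co + Cconj eta * Cconj al * lam <> Cz).
  { apply sum_neq0. rewrite !Cnorm2_mul, !Cnorm2_conj, Cnorm2_one. unfold inT in He; rewrite He.
    unfold inD in *. pose proof (Cnorm2_nonneg al). pose proof (Cnorm2_nonneg lam).
    assert (Cnorm2 al * Cnorm2 lam <= Cnorm2 al * 1)%R by (apply Rmult_le_compat_l; lra). lra. }
  unfold mob. rewrite conj_opp, conj_mul.
  rewrite (T_conj_inv eta He) in *. split.
  - field. repeat split; auto. neqC Ht.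
  - field. repeat split; auto.
    + refine (neq_by _ eta _ _ He0 H2). field; auto.
    + refine (neq_by _ eta _ _ He0 Ht). field; auto.
Qed.

Lemma Cnorm2_div x y : y <> Cz -> Cnorm2 (x / y) = (Cnorm2 x / Cnorm2 y)%R.
Proof. intros H. apply Cnorm2_pos in H. destruct x as [a b], y as [c d]; cunf; simpl in *.
  field. lra. Qed.

Lemma conj_inv x : Cconj (Cinv x) = Cinv (Cconj x).
Proof. destruct x as [a b]; apply Cext; cunf; simpl;
  replace (a * a + - b * - b)%R with (a * a + b * b)%R by ring; unfold Rdiv; ring. Qed.
Lemma conj_div x y : Cconj (x / y) = Cconj x / Cconj y.
Proof. unfold Cdiv. rewrite conj_mul, conj_inv. reflexivity. Qed.

Lemma normAK (e a b : Cplx) :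
  (Cnorm2 (e + a * Cconj b)%Cx - Cnorm2 (Co + Cconj a * e * b)%Cx)%R =
  ((Cnorm2 e - 1) * (1 - Cnorm2 a * Cnorm2 b))%R.
Proof. destruct e, a, b; cunf; simpl; ring. Qed.

Lemma comp_exists om1 e1 a1 om2 e2 a2 :
  inT om1 -> inT e1 -> inD a1 -> inT om2 -> inT e2 -> inD a2 ->
  exists om3 e3 a3, inT om3 /\ inT e3 /\ inD a3 /\
    forall z, inP z -> fmap om1 e1 a1 (fmap om2 e2 a2 z) = fmap om3 e3 a3 z.
Proof.
  intros Hom1 He1 Ha1 Hom2 He2 Ha2.
  pose proof (T_neq0 _ He1) as He10. pose proof (T_neq0 _ He2) as He20.
  set (A := e1 * (e2 + a1 * Cconj a2)).
  set (B := - (e1 * (e2 * a2 + a1))).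
  set (C := - (Cconj a2 + Cconj a1 * e2)).
  set (K := Co + Cconj a1 * e2 * a2).
  assert (HKC : (Cnorm2 C < Cnorm2 K)%R).
  { pose proof (mob_K_C (Cconj a1 * e2) a2) as M. fold C K in M.
    rewrite Cnorm2_mul, Cnorm2_conj in M. unfold inT in He2. rewrite He2 in M.
    unfold inD in Ha1, Ha2.
    assert (0 < (1 - Cnorm2 a1 * 1) * (1 - Cnorm2 a2))%R by (apply Rmult_lt_0_compat; lra). lra. }
  assert (HK : K <> Cz).
  { apply Cneq0. pose proof (Cnorm2_nonneg C). lra. }
  assert (HKp : (0 < Cnorm2 K)%R) by (apply Cnorm2_pos; auto).
  exists (om1 * om2), (A / K), (Cconj (- (C / K))).
  split; [|split; [|split]].
  - unfold inT in *. rewrite Cnorm2_mul, Hom1, Hom2. ring.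
  - unfold inT. rewrite Cnorm2_div by auto. unfold A. rewrite Cnorm2_mul.
    pose proof (normAK e2 a1 a2) as N. unfold inT in He1, He2. rewrite He2 in N. fold K in N.
    rewrite He1. assert (E: Cnorm2 (e2 + a1*Cconj a2)%Cx = Cnorm2 K) by (replace ((1-1)*_)%R with 0%R in N by ring; lra).
    rewrite E. field. lra.
  - unfold inD. rewrite Cnorm2_conj, Cnorm2_opp, Cnorm2_div by auto.
    unfold Rdiv; apply (Rmult_lt_reg_r (Cnorm2 K)); auto; rewrite Rmult_assoc, Rinv_l, Rmult_1_r by lra; lra.
  - apply comp_law; auto.
    + unfold inT. rewrite Cnorm2_div by auto. unfold A. rewrite Cnorm2_mul.
      pose proof (normAK e2 a1 a2) as N. unfold inT in He1, He2. rewrite He2 in N. fold K in N.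
      rewrite He1. assert (E: Cnorm2 (e2 + a1*Cconj a2)%Cx = Cnorm2 K) by (replace ((1-1)*_)%R with 0%R in N by ring; lra).
    rewrite E. field. lra.
    + unfold inD. rewrite Cnorm2_conj, Cnorm2_opp, Cnorm2_div by auto.
      unfold Rdiv; apply (Rmult_lt_reg_r (Cnorm2 K)); auto; rewrite Rmult_assoc, Rinv_l, Rmult_1_r by lra; lra.
    + intros lam Hl.
      assert (H1 : Co - Cconj a2 * lam <> Cz) by (apply one_sub_neq0, normD_mul; auto; apply conjD; auto).
      assert (H2 : C * lam + K <> Cz).
      { replace (C * lam + K) with (K + C * lam) by ring. apply sum_neq0.
        rewrite Cnorm2_mul. unfold inD in Hl. pose proof (Cnorm2_nonneg C).
        assert (Cnorm2 C * Cnorm2 lam <= Cnorm2 C * 1)%R by (apply Rmult_le_compat_l; lra). lra. }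
      assert (Hu : Co - Cconj a1 * mob e2 a2 lam = (C * lam + K) / (Co - Cconj a2 * lam)).
      { unfold mob, C, K. field. auto. }
      unfold mob at 2. rewrite Hu.
      assert (HcK : Cconj K <> Cz) by (apply Cneq0; rewrite Cnorm2_conj; auto).
      unfold mob. rewrite conj_conj, conj_opp, conj_div.
      unfold C, K in *. rewrite ?conj_opp, ?conj_add, ?conj_mul, ?conj_conj, ?conj_one in *.
      rewrite (T_conj_inv e2 He2) in *.
      unfold A, B. field. repeat split; auto.
      apply sum_neq0. unfold inT in He2. rewrite He2.
      apply normD_mul; auto. apply conjD; auto.
Qed.

Lemma inv_exists om eta al : inT om -> inT eta -> inD al ->
  exists om' eta' al', inT om' /\ inT eta' /\ inD al' /\
    forall z, inP z -> fmap om' eta' al' (fmap om eta al z) = z /\ fmap om eta al (fmap om' eta' al' z) = z.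
Proof. intros Hom He Ha. exists (Cconj om), (Cconj eta), (- (eta * al)).
  assert (inD (- (eta * al))).
  { unfold inD. rewrite Cnorm2_opp, Cnorm2_mul. unfold inT in He; rewrite He, Rmult_1_l. exact Ha. }
  split; [apply inT_conj; auto|split; [apply inT_conj; auto|split; auto]].
  apply inv_law; auto. apply inT_conj; auto.
  intros lam Hl. apply mob_inv; auto.
Qed.

Local Close Scope Cplx_scope.

Definition lin (c1 c2 c3 : Cplx) (h : C3) : Cplx :=
  let '(x, s, p) := h in (c1 * x + c2 * s + c3 * p)%Cx.

Definition sD (f : C3 -> Cplx) (z : C3) (c1 c2 c3 : Cplx) : Prop :=
  forall e, 0 < e -> exists d, 0 < d /\ forall h, C3norm2 h < d ->
    Cnorm2 (f (C3add z h) - f z - lin c1 c2 c3 h)%Cx <= e * C3norm2 h.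

Lemma lin_add c1 c2 c3 z h : lin c1 c2 c3 (C3add z h) = (lin c1 c2 c3 z + lin c1 c2 c3 h)%Cx.
Proof. destruct z as [[x s] p], h as [[a b] c]; simpl; ring. Qed.

Lemma lin_bound c1 c2 c3 h :
  Cnorm2 (lin c1 c2 c3 h) <= 3 * (Cnorm2 c1 + Cnorm2 c2 + Cnorm2 c3) * C3norm2 h.
Proof. destruct h as [[a b] c]; simpl.
  eapply Rle_trans; [apply norm_add3_le|]. rewrite !Cnorm2_mul.
  pose proof (Cnorm2_nonneg a); pose proof (Cnorm2_nonneg b); pose proof (Cnorm2_nonneg c);
  pose proof (Cnorm2_nonneg c1); pose proof (Cnorm2_nonneg c2); pose proof (Cnorm2_nonneg c3).
  set (A := Cnorm2 a) in *; set (B := Cnorm2 b) in *; set (Cc := Cnorm2 c) in *.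
  set (x1 := Cnorm2 c1) in *; set (x2 := Cnorm2 c2) in *; set (x3 := Cnorm2 c3) in *.
  assert (x1 * A <= x1 * (A + B + Cc)) by (apply Rmult_le_compat_l; lra).
  assert (x2 * B <= x2 * (A + B + Cc)) by (apply Rmult_le_compat_l; lra).
  assert (x3 * Cc <= x3 * (A + B + Cc)) by (apply Rmult_le_compat_l; lra).
  nra.
Qed.

Lemma rat_real (X Y Z d H K1 T e : R) : 0 < d -> 0 <= X <= K1 * H -> 0 <= Y <= T * H ->
  d <= 2 * Z + 2 * Y -> T * H <= d / 4 -> 0 <= H -> 0 <= K1 -> 0 <= T ->
  (4 * K1 * T / (d * d * d)) * H <= e -> X * Y / (d * d * Z) <= e * H.
Proof. intros Hd HX HY HZ HTH HH HK1 HT He.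
  assert (HZ4 : d / 4 <= Z) by lra. assert (HZp : 0 < Z) by lra.
  assert (HXY : X * Y <= (K1 * H) * (T * H)) by (apply Rmult_le_compat; lra).
  assert (Hdd : 0 < d * d) by (apply Rmult_lt_0_compat; lra).
  assert (Hd3 : 0 < d * d * (d / 4)) by (apply Rmult_lt_0_compat; lra).
  assert (Hden : d * d * (d / 4) <= d * d * Z) by (apply Rmult_le_compat_l; lra).
  assert (X * Y / (d * d * Z) <= (K1 * H) * (T * H) / (d * d * (d / 4))).
  { unfold Rdiv. apply Rmult_le_compat; try lra.
    - apply Rmult_le_pos; lra.
    - left; apply Rinv_0_lt_compat; lra.
    - apply Rinv_le_contravar; lra. }
  assert (E : (K1 * H) * (T * H) / (d * d * (d / 4)) = (4 * K1 * T / (d * d * d)) * H * H) by (field; lra).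
  rewrite E in H0. assert ((4 * K1 * T / (d * d * d)) * H * H <= e * H) by (apply Rmult_le_compat_r; lra).
  lra.
Qed.

Definition ratf (l1 l2 l3 b q1 q2 q3 g : Cplx) (z : C3) : Cplx :=
  ((lin l1 l2 l3 z + b) / (lin q1 q2 q3 z + g))%Cx.

Lemma rat_diff l1 l2 l3 b q1 q2 q3 g z : (lin q1 q2 q3 z + g)%Cx <> Cz ->
  let N := (lin l1 l2 l3 z + b)%Cx in let D := (lin q1 q2 q3 z + g)%Cx in
  sD (ratf l1 l2 l3 b q1 q2 q3 g) z ((D*l1 - N*q1)/(D*D))%Cx ((D*l2 - N*q2)/(D*D))%Cx ((D*l3 - N*q3)/(D*D))%Cx.
Proof. intros HD0 N D. fold D in HD0.
  set (Lam := Cnorm2 l1 + Cnorm2 l2 + Cnorm2 l3).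
  set (Th := Cnorm2 q1 + Cnorm2 q2 + Cnorm2 q3).
  set (d := Cnorm2 D). assert (Hd : 0 < d) by (apply Cnorm2_pos; auto).
  set (T := 3 * Th). set (K1 := 2 * (d * (3 * Lam)) + 2 * (Cnorm2 N * (3 * Th))).
  assert (HT : 0 <= T) by (unfold T, Th; pose proof (Cnorm2_nonneg q1); pose proof (Cnorm2_nonneg q2); pose proof (Cnorm2_nonneg q3); lra).
  assert (HLam : 0 <= Lam) by (unfold Lam; pose proof (Cnorm2_nonneg l1); pose proof (Cnorm2_nonneg l2); pose proof (Cnorm2_nonneg l3); lra).
  assert (HK1 : 0 <= K1).
  { unfold K1. pose proof (Cnorm2_nonneg N).
    assert (0 <= d * (3 * Lam)) by (apply Rmult_le_pos; lra).
    assert (0 <= Cnorm2 N * (3 * Th)) by (apply Rmult_le_pos; unfold T in HT; lra). lra. }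
  set (k := 4 * K1 * T / (d * d * d)).
  assert (Hk : 0 <= k).
  { unfold k. apply Rmult_le_pos.
    - apply Rmult_le_pos; [apply Rmult_le_pos|]; lra.
    - left; apply Rinv_0_lt_compat. apply Rmult_lt_0_compat; [apply Rmult_lt_0_compat|]; lra. }
  intros e He. exists (Rmin (d / (4 * T + 1)) (e / (k + 1))). split.
  { apply Rmin_pos; apply Rdiv_lt_0_compat; lra. }
  intros h Hh. pose proof (Rmin_l (d / (4 * T + 1)) (e / (k + 1))).
  pose proof (Rmin_r (d / (4 * T + 1)) (e / (k + 1))).
  set (Hn := C3norm2 h) in *.
  assert (HH : 0 <= Hn).
  { unfold Hn. destruct h as [[a b'] c]. simpl. pose proof (Cnorm2_nonneg a); pose proof (Cnorm2_nonneg b'); pose proof (Cnorm2_nonneg c). lra. }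
  set (L := lin l1 l2 l3 h). set (Qh := lin q1 q2 q3 h).
  assert (HY : Cnorm2 Qh <= T * Hn) by (apply lin_bound).
  assert (HL : Cnorm2 L <= 3 * Lam * Hn) by (apply lin_bound).
  assert (HTH : T * Hn <= d / 4).
  { assert (Hlt : Hn < d / (4 * T + 1)) by lra.
    apply Rmult_lt_compat_l with (r := (4 * T + 1)) in Hlt; [|lra].
    replace ((4 * T + 1) * (d / (4 * T + 1))) with d in Hlt by (field; lra). lra. }
  assert (HZ : d <= 2 * Cnorm2 (D + Qh)%Cx + 2 * Cnorm2 Qh).
  { unfold d. replace D with ((D + Qh) - Qh)%Cx at 1 by ring. apply norm_sub_le. }
  assert (HDQ : (D + Qh)%Cx <> Cz) by (apply Cneq0; lra).
  assert (Eq : (ratf l1 l2 l3 b q1 q2 q3 g (C3add z h) - ratf l1 l2 l3 b q1 q2 q3 g z -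
     lin ((D*l1 - N*q1)/(D*D)) ((D*l2 - N*q2)/(D*D)) ((D*l3 - N*q3)/(D*D)) h)%Cx =
     (- ((D * L - N * Qh) * Qh) / (D * D * (D + Qh)))%Cx).
  { unfold ratf. rewrite !lin_add. fold N D L Qh.
    replace (lin l1 l2 l3 z + L + b)%Cx with (N + L)%Cx by (unfold N; ring).
    replace (lin q1 q2 q3 z + Qh + g)%Cx with (D + Qh)%Cx by (unfold D; ring).
    fold N D. unfold L, Qh. destruct h as [[a b'] c]. simpl. field. auto. }
  rewrite Eq. rewrite Cnorm2_div by (apply Cmul_neq0; auto; apply Cmul_neq0; auto).
  rewrite Cnorm2_opp, !Cnorm2_mul. fold d.
  apply (rat_real _ _ _ d Hn K1 T e); auto.
  - split; [apply Cnorm2_nonneg|]. eapply Rle_trans; [apply norm_sub_le|].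
    rewrite !Cnorm2_mul. fold d. unfold K1.
    pose proof (Cnorm2_nonneg N).
    assert (d * Cnorm2 L <= d * (3 * Lam * Hn)) by (apply Rmult_le_compat_l; lra).
    assert (Cnorm2 N * Cnorm2 Qh <= Cnorm2 N * (T * Hn)) by (apply Rmult_le_compat_l; lra).
    unfold T in *. lra.
  - split; [apply Cnorm2_nonneg|auto].
  - assert (Hlt : Hn < e / (k + 1)) by lra.
    apply Rmult_lt_compat_l with (r := (k + 1)) in Hlt; [|lra].
    replace ((k + 1) * (e / (k + 1))) with e in Hlt by (field; lra).
    fold k. assert (k * Hn <= (k+1) * Hn) by (apply Rmult_le_compat_r; lra). lra.
Qed.

Lemma diff3 f1 f2 f3 z a1 a2 a3 b1 b2 b3 c1 c2 c3 :
  sD f1 z a1 a2 a3 -> sD f2 z b1 b2 b3 -> sD f3 z c1 c2 c3 ->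
  Cdifferentiable (fun w => (f1 w, f2 w, f3 w)) z.
Proof. intros D1 D2 D3.
  exists (fun h => (lin a1 a2 a3 h, lin b1 b2 b3 h, lin c1 c2 c3 h)). split.
  { split.
    - intros [[x s] p] [[x' s'] p']; simpl; f_equal; [f_equal|]; ring.
    - intros c [[x s] p]; simpl; f_equal; [f_equal|]; ring. }
  intros eps Heps.
  assert (He : 0 < eps * eps / 3) by (apply Rdiv_lt_0_compat; [apply Rmult_lt_0_compat|]; lra).
  destruct (D1 _ He) as [d1 [Hd1 P1]]. destruct (D2 _ He) as [d2 [Hd2 P2]].
  destruct (D3 _ He) as [d3 [Hd3 P3]].
  set (m := Rmin d1 (Rmin d2 d3)).
  assert (Hm : 0 < m) by (unfold m; repeat apply Rmin_pos; auto).
  exists (sqrt m). split; [apply sqrt_lt_R0; auto|].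
  intros h [Hh0 Hh]. rewrite sqrt_sqrt in Hh by lra.
  assert (m <= d1) by (unfold m; apply Rmin_l).
  assert (m <= d2) by (unfold m; eapply Rle_trans; [apply Rmin_r|apply Rmin_l]).
  assert (m <= d3) by (unfold m; eapply Rle_trans; [apply Rmin_r|apply Rmin_r]).
  specialize (P1 h ltac:(lra)). specialize (P2 h ltac:(lra)). specialize (P3 h ltac:(lra)).
  simpl. lra.
Qed.

Lemma Cdiff_ext F G z : (forall w, F w = G w) -> Cdifferentiable G z -> Cdifferentiable F z.
Proof. intros E [L [HL HD]]. exists L. split; auto. intros eps He.
  destruct (HD eps He) as [d [Hd P]]. exists d. split; auto. intros h Hh. rewrite !E. auto. Qed.

Lemma fmap_rat om eta al w :
  fmap om eta al w =
  (ratf (eta * om * (Co - al * Cconj al)) Cz Cz Cz Cz (- Cconj al) (Cconj al * Cconj al) Co w,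
   ratf Cz (eta * (Co + al * Cconj al)) (- (eta * (Co + Co) * Cconj al)) (- (eta * (Co + Co) * al))
        Cz (- Cconj al) (Cconj al * Cconj al) Co w,
   ratf Cz (- (eta * eta * al)) (eta * eta) (eta * eta * al * al) Cz (- Cconj al) (Cconj al * Cconj al) Co w)%Cx.
Proof. destruct w as [[x s] p]. unfold fmap, ratf, lin. rewrite RtoC_norm, RtoC2.
  replace (Co - Cconj al * s + Cconj al * Cconj al * p)%Cx with
    (Cz * x + - Cconj al * s + Cconj al * Cconj al * p + Co)%Cx by ring.
  unfold Cdiv. f_equal; [f_equal|]; ring.
Qed.

Lemma fmap_holo om eta al z : den_of al z <> Cz -> Cdifferentiable (fmap om eta al) z.
Proof. intros Hd.
  assert (Hq : (lin Cz (- Cconj al) (Cconj al * Cconj al) z + Co)%Cx <> Cz).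
  { destruct z as [[x s] p]. simpl in Hd |- *. intro E; apply Hd; rewrite <- E; ring. }
  eapply Cdiff_ext; [intro w; apply fmap_rat|].
  eapply diff3; apply rat_diff; exact Hq.
Qed.

Local Close Scope Cplx_scope.

Lemma den_lip al z w : inD al -> Cnorm2 (den_of al z - den_of al w)%Cx <= 2 * C3dist2 z w.
Proof. intros Ha. unfold inD in Ha. destruct z as [[x s] p], w as [[x' s'] p']. unfold C3dist2. simpl.
  replace (Co - Cconj al * s + Cconj al * Cconj al * p - (Co - Cconj al * s' + Cconj al * Cconj al * p'))%Cx
    with ((- Cconj al) * (s - s') + (Cconj al * Cconj al) * (p - p'))%Cx by ring.
  eapply Rle_trans; [apply norm_add_le|]. rewrite !Cnorm2_mul, Cnorm2_opp, !Cnorm2_conj.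
  pose proof (Cnorm2_nonneg al). pose proof (Cnorm2_nonneg (x - x')%Cx).
  pose proof (Cnorm2_nonneg (s - s')%Cx). pose proof (Cnorm2_nonneg (p - p')%Cx).
  assert (Cnorm2 al * Cnorm2 (s - s')%Cx <= 1 * Cnorm2 (s - s')%Cx) by (apply Rmult_le_compat_r; lra).
  assert (Cnorm2 al * Cnorm2 al <= 1 * 1) by (apply Rmult_le_compat; lra).
  assert (Cnorm2 al * Cnorm2 al * Cnorm2 (p - p')%Cx <= 1 * 1 * Cnorm2 (p - p')%Cx) by (apply Rmult_le_compat_r; lra).
  lra.
Qed.

Lemma fmap_extends om eta al : inD al -> extends_near_Pbar (fmap om eta al).
Proof. intros Ha. pose proof Ha as Ha'. unfold inD in Ha'. pose proof (Cnorm2_nonneg al).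
  set (m := (1 - Cnorm2 al)^4/16).
  assert (Hm : 0 < m) by (unfold m; apply Rdiv_lt_0_compat; [apply pow_lt|]; lra).
  exists (fun z => m / 4 < Cnorm2 (den_of al z)), (fmap om eta al).
  split; [|split; [|split]].
  - intros z Hz. destruct (lower_keep (m/4) (Cnorm2 (den_of al z))) as [e [He Pe]]; [lra|lra|].
    exists (sqrt (e/2)). split; [apply sqrt_lt_R0; lra|].
    intros w Hw. rewrite sqrt_sqrt in Hw by lra.
    apply (Pe (den_of al z)); [lra|]. pose proof (den_lip al z w Ha). lra.
  - intros z Hz. destruct (lower_keep (m/4) m) as [e [He Pe]]; [lra|lra|].
    destruct (Hz (sqrt (e/2))) as [w [Hw Hd]]; [apply sqrt_lt_R0; lra|].
    rewrite sqrt_sqrt in Hd by lra.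
    destruct Hw as [A [HA HwA]].
    apply (Pe (den_of al w)).
    + subst w. apply ball_den; auto.
    + pose proof (den_lip al z w Ha).
      replace (den_of al w - den_of al z)%Cx with (- (den_of al z - den_of al w))%Cx by ring.
      rewrite Cnorm2_opp. lra.
  - intros z Hz. apply fmap_holo. apply Cneq0. lra.
  - auto.
Qed.

Lemma fmap_autP om eta al : inT om -> inT eta -> inD al -> autP (fmap om eta al).
Proof. intros Hom He Ha.
  assert (Ha2 : inD (- (eta * al))%Cx).
  { unfold inD. rewrite Cnorm2_opp, Cnorm2_mul. unfold inT in He; rewrite He, Rmult_1_l. exact Ha. }
  split; [intros; apply fmap_P; auto|split].
  { intros z Hz. apply fmap_holo. apply den_P_neq; auto. }
  exists (fmap (Cconj om) (Cconj eta) (- (eta * al))%Cx).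
  split; [intros; apply fmap_P; auto; apply inT_conj; auto|split].
  { intros z Hz. apply fmap_holo. apply den_P_neq; auto. }
  assert (Hinv := inv_law om eta al (Cconj eta) (- (eta * al))%Cx Hom He Ha (inT_conj _ He) Ha2
     (fun lam Hl => mob_inv eta al lam He Ha Hl)).
  split; intros z Hz; apply (Hinv z Hz).
Qed.

Theorem theorem7p1 :
  (forall omega eta alpha : Cplx, inT omega -> inT eta -> inD alpha ->
     autP (fmap omega eta alpha) /\ extends_near_Pbar (fmap omega eta alpha)) /\
  (forall omega1 eta1 alpha1 omega2 eta2 alpha2 eta3 alpha3 : Cplx,
     inT omega1 -> inT eta1 -> inD alpha1 ->
     inT omega2 -> inT eta2 -> inD alpha2 ->
     inT eta3 -> inD alpha3 ->
     (forall lam, inD lam -> mob eta3 alpha3 lam = mob eta1 alpha1 (mob eta2 alpha2 lam)) ->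
     forall z, inP z ->
       fmap omega1 eta1 alpha1 (fmap omega2 eta2 alpha2 z)
       = fmap (omega1 * omega2)%Cx eta3 alpha3 z) /\
  (forall omega eta alpha eta' alpha' : Cplx,
     inT omega -> inT eta -> inD alpha -> inT eta' -> inD alpha' ->
     (forall lam, inD lam ->
        mob eta' alpha' (mob eta alpha lam) = lam /\
        mob eta alpha (mob eta' alpha' lam) = lam) ->
     forall z, inP z ->
       fmap (Cconj omega) eta' alpha' (fmap omega eta alpha z) = z /\
       fmap omega eta alpha (fmap (Cconj omega) eta' alpha' z) = z) /\
  (exists omega eta alpha : Cplx, inT omega /\ inT eta /\ inD alpha /\
     forall z, inP z -> fmap omega eta alpha z = z) /\
  (forall omega1 eta1 alpha1 omega2 eta2 alpha2 : Cplx,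
     inT omega1 -> inT eta1 -> inD alpha1 ->
     inT omega2 -> inT eta2 -> inD alpha2 ->
     exists omega3 eta3 alpha3 : Cplx, inT omega3 /\ inT eta3 /\ inD alpha3 /\
       forall z, inP z ->
         fmap omega1 eta1 alpha1 (fmap omega2 eta2 alpha2 z) = fmap omega3 eta3 alpha3 z) /\
  (forall omega eta alpha : Cplx, inT omega -> inT eta -> inD alpha ->
     exists omega' eta' alpha' : Cplx, inT omega' /\ inT eta' /\ inD alpha' /\
       forall z, inP z ->
         fmap omega' eta' alpha' (fmap omega eta alpha z) = z /\
         fmap omega eta alpha (fmap omega' eta' alpha' z) = z).
Proof.
  split; [|split; [|split; [|split; [|split]]]].
  - intros. split; [apply fmap_autP; auto | apply fmap_extends; auto].
  - exact comp_law.
  - exact inv_law.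
  - exists Co, Co, Cz. split; [apply inT_one|split; [apply inT_one|split; [apply zeroD|]]].
    intros; apply fmap_id.
  - exact comp_exists.
  - exact inv_exists.
Qed.
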